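(* Let $n\geq 1$, $m=\frac{n^2+n}{2}$, and let $z:\mathbb{R}^n\to\mathbb{R}^m$ be the map $z(x)=\begin{bmatrix}x_1^2 & x_1x_2 & \cdots & x_1x_n & x_2^2 & x_2x_3 & \cdots & x_n^2\end{bmatrix}^\top$ listing all quadratic monomials of $x$. Let $E=E^\top\in\mathbb{R}^{n\times n}$ be positive definite, $\alpha>0$, and $\mathcal{E}_\alpha=\{x : x^\top E x\leq\alpha^2\}$. Let $c_1,c_2,c_3\in\mathbb{R}^n$ be three nonzero, linearly independent vectors with $c_3$ orthogonal to both $c_1$ and $c_2$, and define $\phi(x)=x^\top Q x$ with $Q=\frac12(c_1c_2^\top+c_2c_1^\top)+c_3c_3^\top$. Then there exists $b\in\mathbb{R}^m$ such that $\phi(x)=b^\top z(x)$ for all $x$. Moreover, letting $W$ be either $(c_1^\top E^{-1}c_1)\,c_2c_2^\top$ or $(c_2^\top E^{-1}c_2)\,c_1c_1^\top$, and $\gamma=\lambda_{\max}\!\left(E^{-1/2}(2Q-c_3c_3^\top)E^{-1/2}\right)$, we have $$\begin{bmatrix} x\\ w\end{bmatrix}^\top\begin{bmatrix}\alpha^2 (W+\gamma c_3c_3^\top) & 0\\ 0 & -bb^\top\end{bmatrix}\begin{bmatrix} x\\ w\end{bmatrix}\geq 0\quad\text{for all } x\in\mathcal{E}_\alpha,\ w=z(x).$$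
   Context: $\lambda_{\max}(\cdot)$ denotes the largest eigenvalue of a real symmetric matrix, and $E^{-1/2}$ is the inverse of the symmetric positive definite square root of $E$. *)

(* Defs.v *)
From HB Require Import structures.
From mathcomp Require Import all_boot all_order all_algebra.
From mathcomp Require Import classical_sets reals.
Set Implicit Arguments. Unset Strict Implicit. Unset Printing Implicit Defensive.
Import Order.TTheory GRing.Theory Num.Theory.
Local Open Scope ring_scope.
Local Open Scope classical_set_scope.

Section Defs.
Variable R : realType.

Definition qf n (A : 'M[R]_n) (x : 'cV[R]_n) : R := (x^T *m A *m x) 0 0.

Definition symmetric n (A : 'M[R]_n) : Prop := A^T = A.
Definition posdef n (A : 'M[R]_n) : Prop :=
  symmetric A /\ forall x : 'cV[R]_n, x != 0 -> 0 < qf A x.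

(* largest eigenvalue: supremum of the (finite, nonempty for symmetric A)
   set of real eigenvalues of A *)
Definition lambda_max n (A : 'M[R]_n) : R := sup [set l : R | eigenvalue A l].

(* k-th coordinate of x (0-based), 0 if out of range *)
Definition coord_at n (x : 'cV[R]_n) (k : nat) : R :=
  odflt 0 (omap (fun i : 'I_n => x i 0) (insub k)).

Definition mdim (n : nat) : nat := ((n * n + n) %/ 2)%N.

Definition quad_pairs (n : nat) : seq (nat * nat) :=
  [seq (i, j) | i <- iota 0 n, j <- iota i (n - i)].

(* z(x) = [x1^2, x1x2, ..., x1xn, x2^2, x2x3, ..., xn^2]^T *)
Definition zmap n (x : 'cV[R]_n) : 'cV[R]_(mdim n) :=
  \col_(k < mdim n)
    (let p := nth (0%N, 0%N) (quad_pairs n) k in coord_at x p.1 * coord_at x p.2).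

End Defs.

(* Main.v *)
Require Import Defs.
From HB Require Import structures.
From mathcomp Require Import all_boot all_order all_algebra.
From mathcomp Require Import classical_sets reals.
From mathcomp Require Import all_classical all_reals all_analysis.
From mathcomp Require Import zify ring lra.
Import Order.TTheory GRing.Theory Num.Theory.
Import numFieldNormedType.Exports.
Local Open Scope ring_scope.

Local Open Scope classical_set_scope.
Section Ray.
Context {R : realType} {n : nat}.
Implicit Types y z : 'rV[R]_n.

Definition bl (A : 'M[R]_n) y z := (y *m A *m z^T) 0 0.

Lemma blE A y z : bl A y z = \sum_j \sum_i (y 0 i * A i j * z 0 j).
Proof.
rewrite /bl mxE; apply: eq_bigr => j _; rewrite mxE big_distrl /=.
by apply: eq_bigr => i _; rewrite mxE.
Qed.

Lemma bl_cont A : continuous (fun y => bl A y y).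
Proof.
have -> : (fun y => bl A y y) = fun y => \sum_j \sum_i (y 0 i * A i j * y 0 j).
  by apply: funext => y; rewrite blE.
apply: continuous_big; first exact: add_continuous.
move=> j _; apply: continuous_big; first exact: add_continuous.
move=> i _ y.
apply: (@continuousM R _ (fun y : 'rV[R]_n => y 0 i * A i j) (fun y => y 0 j) y).
  apply: (@continuousM R _ (fun y : 'rV[R]_n => y 0 i) (fun _ => A i j) y).
    exact: coord_continuous.
  exact: cst_continuous.
exact: coord_continuous.
Qed.

Lemma pE y : bl 1%:M y y = \sum_i y 0 i ^+ 2.
Proof.
rewrite blE; apply: eq_bigr => j _.
rewrite (bigD1 j) //= mxE eqxx mulr1 expr2 big1 ?addr0 //.
by move=> i /negbTE hij; rewrite mxE hij mulr0 mul0r.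
Qed.

Lemma p_ge0 y : 0 <= bl 1%:M y y.
Proof. by rewrite pE sumr_ge0 // => i _; rewrite sqr_ge0. Qed.

Lemma p_eq0 y : bl 1%:M y y = 0 -> y = 0.
Proof.
rewrite pE => /eqP; rewrite psumr_eq0; last by move=> i _; rewrite sqr_ge0.
move=> /allP H; apply/rowP => i; rewrite mxE.
by have := H i (mem_index_enum _); rewrite sqrf_eq0 => /eqP.
Qed.

Lemma blZ A k y z : bl A (k *: y) z = k * bl A y z.
Proof. by rewrite /bl -!scalemxAl mxE. Qed.

Lemma blZr A k y z : bl A y (k *: z) = k * bl A y z.
Proof. by rewrite /bl linearZ /= -scalemxAr mxE. Qed.

Lemma blDl A y y' z : bl A (y + y') z = bl A y z + bl A y' z.
Proof. by rewrite /bl !mulmxDl mxE. Qed.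

Lemma blDr A y z z' : bl A y (z + z') = bl A y z + bl A y z'.
Proof. by rewrite /bl linearD /= mulmxDr mxE. Qed.

Lemma blC A y z : A^T = A -> bl A z y = bl A y z.
Proof.
move=> sA; rewrite /bl.
set M : 'M[R]_1 := z *m A *m y^T.
have e : M 0 0 = M^T 0 0.
  rewrite [RHS]mxE. done.
rewrite e.
rewrite /M.
by rewrite !trmx_mul trmxK sA mulmxA.
Qed.

Lemma blN A y z : bl A (- y) z = - bl A y z.
Proof. by rewrite -scaleN1r blZ mulN1r. Qed.

Lemma blNr A y z : bl A y (- z) = - bl A y z.
Proof. by rewrite -scaleN1r blZr mulN1r. Qed.


Lemma quad_cond (P C : R) : C <= 0 -> 0 <= P ->
  (forall t : R, 0 < t -> 2 * t * P + t ^+ 2 * C <= 0) -> P = 0.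
Proof.
move=> C0 P0 H; apply/eqP; rewrite eq_le P0 andbT; rewrite leNgt; apply/negP => Pp.
have t0 : 0 < P / (1 - C) by rewrite divr_gt0 // subr_gt0 (le_lt_trans C0).
have := H _ t0.
have -> : 2 * (P / (1 - C)) * P + (P / (1 - C)) ^+ 2 * C
         = (P / (1 - C)) ^+ 2 * (2 - C).
  have hC : 1 - C != 0 by rewrite gt_eqF // subr_gt0 (le_lt_trans C0).
  by field.
rewrite leNgt => /negP; apply; rewrite mulr_gt0 // ?exprn_gt0 //.
by rewrite subr_gt0 (le_lt_trans C0).
Qed.

Lemma rayleigh A : A^T = A -> (0 < n)%N ->
  exists2 mu, eigenvalue A mu & forall y, bl A y y <= mu * bl 1%:M y y.
Proof.
move=> sA n0.
pose p y := bl 1%:M y y.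
pose q y := bl A y y.
pose K := [set y | p y = 1].
have pcont : continuous p by exact: bl_cont.
have qcont : continuous q by exact: bl_cont.
have pZ k y : p (k *: y) = k ^+ 2 * p y by rewrite /p blZ blZr mulrA expr2.
have qZ k y : q (k *: y) = k ^+ 2 * q y by rewrite /q blZ blZr mulrA expr2.
have ppos y : y != 0 -> 0 < p y.
  move=> y0; rewrite lt_def p_ge0 andbT; apply/eqP => /p_eq0 /eqP.
  by rewrite (negbTE y0).
have normK y : y != 0 -> K ((Num.sqrt (p y))^-1 *: y).
  move=> y0; rewrite /K /= pZ exprVn sqr_sqrtr ?p_ge0 // mulVf //.
  by rewrite gt_eqF // ppos.
have K0 : K !=set0.
  have y0 : (const_mx 1 : 'rV[R]_n) != 0.
    apply/negP => /eqP /rowP /(_ (Ordinal n0)); rewrite !mxE => /eqP.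
    by rewrite oner_eq0.
  by exists ((Num.sqrt (p (const_mx 1)))^-1 *: const_mx 1); exact: normK.
have Kc : compact K.
  apply: bounded_closed_compact.
    exists 1; split => // M M1 y; rewrite /K /= => py1.
    rewrite [X in X <= _]mx_normrE; apply: le_trans (ltW M1).
    apply: bigmax_le => // -[i j] _ /=.
    rewrite (ord1 i).
    have : y 0 j ^+ 2 <= 1.
      rewrite -py1 /p pE (bigD1 j) //= lerDl sumr_ge0 // => k _.
      by rewrite sqr_ge0.
    by rewrite -real_normK ?num_real // expr_le1.
  have -> : K = p @^-1` [set 1] by [].
  apply: closed_comp; last exact: closed_eq.
  by move=> y _; exact: pcont.
have [c cK cmax] := compact_EVT_max K0 Kc (continuous_subspaceT qcont).
set mu := q c.
have pc1 : p c = 1 by move: cK; rewrite inE.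
have bound y : q y <= mu * p y.
  have [->|y0] := eqVneq y 0.
    by rewrite /q /p /bl !mul0mx !mxE mulr0.
  have := cmax _ (mem_set (normK _ y0)).
  rewrite qZ exprVn sqr_sqrtr ?p_ge0 // -/mu => h.
  by move: h; rewrite mulrC ler_pdivrMr ?ppos.
have F0 y : q y - mu * p y <= 0 by rewrite subr_le0.
pose h := c *m A - mu *: c.
have Hexp t : q (c + t *: h) - mu * p (c + t *: h)
    = 2 * t * p h + t ^+ 2 * (q h - mu * p h).
  have e1 : bl A c h - mu * bl 1%:M c h = p h.
    rewrite /p {2}/h blDl blN blZ.
    by congr (_ - _); rewrite /bl mulmx1.
  have qc : bl A c c = mu by [].
  clearbody h.
  rewrite /q /p !blDl !blDr !blZ !blZr (blC A c h sA) (blC 1%:M c h (trmx1 _ _)).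
  rewrite /p in pc1 e1; rewrite pc1 qc -e1.
  clearbody mu. ring.
have ph0 : p h = 0.
  have := @quad_cond (p h) _ (F0 h) (p_ge0 h); apply => t _.
  by rewrite -Hexp.
exists mu => //; apply/eigenvalueP; exists c.
  by apply/eqP; rewrite -subr_eq0; apply/eqP/p_eq0.
apply/negP => /eqP c0; move: pc1; rewrite c0 /p /bl !mul0mx mxE => /eqP.
by rewrite eq_sym oner_eq0.
Qed.

End Ray.



Local Close Scope classical_set_scope.
Lemma size_qp n : size (quad_pairs n) = mdim n.
Proof.
rewrite /quad_pairs size_allpairs_dep /mdim.
have -> : [seq size (iota i (n - i)) | i <- iota 0 n] = [seq (n - i)%N | i <- iota 0 n].
  by apply: eq_map => i; rewrite size_iota.
rewrite sumnE big_map.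
have e : forall k, (\sum_(i <- iota 0 k) (n - i) = \sum_(i <- iota 0 k) (n - i))%N by [].
have S : forall k, (k <= n)%N -> (2 * \sum_(i <- iota 0 k) (n - i) = k * (2 * n - k + 1))%N.
  elim=> [|k IH] hk; first by rewrite big_nil.
  have -> : iota 0 k.+1 = iota 0 k ++ [:: k] by rewrite -addn1 iotaD.
  rewrite big_cat /= big_cons big_nil addn0 mulnDr IH; last by lia.
  nia.
rewrite -(mulKn (\sum_(i <- iota 0 n) (n - i))%N (isT : (0 < 2)%N)) S //.
congr divn; nia.
Qed.

Lemma sym_sum (R : comRingType) (h : nat -> nat -> R)
  (hs : forall i j, h i j = h j i) N :
  \sum_(i <- iota 0 N) \sum_(j <- iota i (N - i)) ((if i == j then 1 else 2) * h i j)
  = \sum_(i <- iota 0 N) \sum_(j <- iota 0 N) h i j.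
Proof.
have E : iota 0 N = index_iota 0 N by rewrite /index_iota subn0.
rewrite E.
change (\sum_(0 <= i < N) \sum_(i <= j < N) ((if i == j then 1 else 2) * h i j)
  = \sum_(0 <= i < N) \sum_(0 <= j < N) h i j).
elim: N {E} => [|N IH]; first by rewrite !big_geq.
rewrite big_nat_recr //= big_nat1 eqxx mul1r.
rewrite (@eq_big_nat _ _ _ 0 N _ (fun i => \sum_(i <= j < N) ((if i == j then 1 else 2) * h i j) + 2 * h i N)); last first.
  move=> i /andP [_ iN]; rewrite big_nat_recr /=; last by rewrite ltnW.
  by rewrite (ltn_eqF iN).
rewrite big_split /= IH.
rewrite big_nat_recr // [\sum_(0 <= j < N.+1) h N j]big_nat_recr //=.
have e2 : \sum_(0 <= i < N) \sum_(0 <= j < N.+1) h i j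
    = \sum_(0 <= i < N) (\sum_(0 <= j < N) h i j + h i N).
  by apply: eq_big_nat => i _; rewrite big_nat_recr.
rewrite e2.
rewrite big_split /= -big_distrr /=.
under [\sum_(0 <= i < N) h N i]eq_bigr do rewrite hs.
set a := \sum_(0 <= i < N) h i N. set b := \sum_(0 <= i < N) \sum_(0 <= j < N) h i j.
ring.
Qed.

Section Expand.
Variable R : realType.

Definition Qat {n} (Q : 'M[R]_n) (i j : nat) : R :=
  odflt 0 (omap (fun i' : 'I_n => odflt 0 (omap (fun j' : 'I_n => Q i' j') (insub j))) (insub i)).

Definition bvec {n} (Q : 'M[R]_n) : 'cV[R]_(mdim n) :=
  \col_(k < mdim n) (let p := nth (0%N, 0%N) (quad_pairs n) k in
     (if p.1 == p.2 then 1 else 2) * Qat Q p.1 p.2).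

Lemma Qat_sym n (Q : 'M[R]_n) i j : Q^T = Q -> Qat Q i j = Qat Q j i.
Proof.
move=> sQ; rewrite /Qat.
case: insubP => [i' _ _|_]; case: insubP => [j' _ _|_] //=.
by rewrite -{1}sQ mxE.
Qed.

Lemma expand n (Q : 'M[R]_n) (x : 'cV[R]_n) : Q^T = Q ->
  qf Q x = ((bvec Q)^T *m zmap x) 0 0.
Proof.
move=> sQ.
pose h i j := coord_at x i * Qat Q i j * coord_at x j.
have E : iota 0 n = index_iota 0 n by rewrite /index_iota subn0.
have Hsum : \sum_(i <- iota 0 n) \sum_(j <- iota 0 n) h i j
    = \sum_(i < n) \sum_(j < n) (x i 0 * Q i j * x j 0).
  rewrite E big_mkord; apply: eq_bigr => i _; rewrite big_mkord.
  by apply: eq_bigr => j _; rewrite /h /coord_at /Qat !valK.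
have LHS : qf Q x = \sum_(i < n) \sum_(j < n) (x i 0 * Q i j * x j 0).
  rewrite /qf mxE.
  under eq_bigr do rewrite mxE big_distrl.
  rewrite exchange_big; apply: eq_bigr => i _; apply: eq_bigr => j _.
  by rewrite mxE.
rewrite LHS -Hsum mxE.
pose g (p : nat * nat) := (if p.1 == p.2 then 1 else 2) * Qat Q p.1 p.2
   * (coord_at x p.1 * coord_at x p.2).
have -> : \sum_(k < mdim n) (bvec Q)^T 0 k * zmap x k 0
   = \sum_(k < mdim n) g (nth (0%N, 0%N) (quad_pairs n) k).
  by apply: eq_bigr => k _; rewrite !mxE.
rewrite -(big_mkord xpredT (fun k => g (nth (0%N, 0%N) (quad_pairs n) k))).
rewrite -size_qp.
have -> : \sum_(0 <= k < size (quad_pairs n)) g (nth (0%N, 0%N) (quad_pairs n) k)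
    = \sum_(p <- quad_pairs n) g p by rewrite (big_nth (0%N, 0%N)).
rewrite /quad_pairs big_allpairs_dep /=.
pose h' i j := Qat Q i j * (coord_at x i * coord_at x j).
have -> : \sum_(i <- iota 0 n) \sum_(j <- iota i (n - i)) g (i, j)
   = \sum_(i <- iota 0 n) \sum_(j <- iota i (n - i)) ((if i == j then 1 else 2) * h' i j).
  by apply: eq_bigr => i _; apply: eq_bigr => j _; rewrite /g /h' /= !mulrA.
rewrite sym_sum; last first.
  by move=> i j; rewrite /h' (@Qat_sym _ Q i j sQ) [coord_at x i * _]mulrC.
by apply: eq_bigr => i _; apply: eq_bigr => j _; rewrite /h /h'; ring.
Qed.
End Expand.

Set Implicit Arguments.
Section Main.
Context {R : realType}.

Lemma lmax_bound n (A : 'M[R]_n) : A^T = A -> (0 < n)%N ->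
  forall x : 'cV[R]_n, qf A x <= lambda_max A * (x^T *m x) 0 0.
Proof.
move=> sA n0 x.
have [mu emu bound] := rayleigh A sA n0.
have hs : has_sup [set l : R | eigenvalue A l].
  split; first by exists mu.
  exists mu => l /eigenvalueP [v vA v0].
  have := bound v.
  have -> : bl A v v = l * bl 1%:M v v by rewrite /bl vA -scalemxAl mulmx1 mxE.
  rewrite ler_pM2r //.
  rewrite lt_def p_ge0 andbT; apply/eqP => /p_eq0 /eqP; by rewrite (negbTE v0).
have mule : mu <= lambda_max A by apply: sup_upper_bound.
have := bound x^T.
rewrite /bl trmxK mulmx1 => h.
rewrite /qf; apply: (le_trans h); apply: ler_wpM2r => //.
have := p_ge0 x^T; by rewrite /bl trmxK mulmx1.
Qed.

Lemma tr11 n (u v : 'cV[R]_n) : (u^T *m v) 0 0 = (v^T *m u) 0 0.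
Proof.
set M := u^T *m v.
have e : M 0 0 = M^T 0 0 by rewrite [RHS]mxE.
by rewrite e /M trmx_mul trmxK.
Qed.

Lemma mul11 (M N : 'M[R]_1) : (M *m N) 0 0 = M 0 0 * N 0 0.
Proof. by rewrite mxE big_ord1. Qed.

Lemma qf_outer n (u v x : 'cV[R]_n) : qf (u *m v^T) x = (u^T *m x) 0 0 * (v^T *m x) 0 0.
Proof.
by rewrite /qf !mulmxA -(mulmxA (x^T *m u)) mul11 tr11.
Qed.

Lemma qfD n (A B : 'M[R]_n) x : qf (A + B) x = qf A x + qf B x.
Proof. by rewrite /qf mulmxDr mulmxDl mxE. Qed.

Lemma qfZ n (k : R) (A : 'M[R]_n) x : qf (k *: A) x = k * qf A x.
Proof. by rewrite /qf -scalemxAr -scalemxAl mxE. Qed.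

Lemma qfN n (A : 'M[R]_n) x : qf (- A) x = - qf A x.
Proof. by rewrite -scaleN1r qfZ mulN1r. Qed.

Lemma qf_block n m (A : 'M[R]_n) (D : 'M[R]_m) x w :
  qf (block_mx A 0 0 D) (col_mx x w) = qf A x + qf D w.
Proof.
rewrite /qf tr_col_mx mul_row_block !mulmx0 addr0 add0r mul_row_col.
by rewrite mxE.
Qed.

Lemma CS n (u y : 'cV[R]_n) :
  ((u^T *m y) 0 0) ^+ 2 <= (u^T *m u) 0 0 * (y^T *m y) 0 0.
Proof.
have E1 (a b : 'cV[R]_n) : (a^T *m b) 0 0 = bl 1%:M a^T b^T by rewrite /bl mulmx1 trmxK.
rewrite !E1.
set U := u^T; set Y := y^T.
have [->|U0] := eqVneq U 0.
  by rewrite /bl !mul0mx !mxE expr0n /= mul0r.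
have pU : 0 < bl 1%:M U U.
  rewrite lt_def p_ge0 andbT; apply/eqP => /p_eq0 /eqP; by rewrite (negbTE U0).
have := p_ge0 (bl 1%:M U U *: Y - bl 1%:M U Y *: U).
rewrite !(blDl, blDr, blN, blNr, blZ, blZr) (blC 1%:M U Y (trmx1 _ _)).
set a := bl 1%:M U U; set B := bl 1%:M U Y; set c := bl 1%:M Y Y.
move=> h.
have h2 : 0 <= a * (a * c - B ^+ 2) by move: h; congr (_ <= _); ring.
rewrite -subr_ge0; rewrite (pmulr_rge0 _ pU) in h2; exact: h2.
Qed.

Lemma posdef_unit n (S : 'M[R]_n) : posdef S -> S \in unitmx.
Proof.
move=> [_ Sp]; rewrite -row_free_unit -kermx_eq0.
case: (pickP (fun i => row i (kermx S) != 0)) => [i Ki|H]; last first.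
  apply/eqP/row_matrixP => i; rewrite row0.
  by move: (H i) => /negbFE/eqP.
exfalso.
pose v := row i (kermx S).
have vS : v *m S = 0 by rewrite /v -row_mul mulmx_ker row0.
have : v^T != 0.
  apply/negP => /eqP h; move: Ki; by rewrite -/v -(trmxK v) h trmx0 eqxx.
move=> /Sp; by rewrite /qf trmxK vS mul0mx mxE ltxx.
Qed.

End Main.

Theorem theorem3 (R : realType) (n : nat) (hn : (1 <= n)%N)
  (E : 'M[R]_n) (hE : posdef E) (alpha : R) (halpha : 0 < alpha)
  (c1 c2 c3 : 'cV[R]_n)
  (hc1 : c1 != 0) (hc2 : c2 != 0) (hc3 : c3 != 0)
  (hfree : free [:: c1; c2; c3])
  (h31 : (c3^T *m c1) 0 0 = 0) (h32 : (c3^T *m c2) 0 0 = 0) :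
  let Q := 2^-1 *: (c1 *m c2^T + c2 *m c1^T) + c3 *m c3^T in
  let phi := fun x : 'cV[R]_n => qf Q x in
  exists b : 'cV[R]_(mdim n),
    (forall x : 'cV[R]_n, phi x = (b^T *m zmap x) 0 0) /\
    (forall S : 'M[R]_n, posdef S -> S *m S = E ->
     (* S = E^{1/2}, so invmx S = E^{-1/2} *)
     let gamma := lambda_max (invmx S *m (2%:R *: Q - c3 *m c3^T) *m invmx S) in
     forall W : 'M[R]_n,
       W = qf (invmx E) c1 *: (c2 *m c2^T) \/
       W = qf (invmx E) c2 *: (c1 *m c1^T) ->
     forall x : 'cV[R]_n, qf E x <= alpha ^+ 2 ->
       let w := zmap x in
       0 <= qf (block_mx (alpha ^+ 2 *: (W + gamma *: (c3 *m c3^T))) 0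
                         0 (- (b *m b^T)))
               (col_mx x w)).
Proof.
Proof.
move=> Q phi.
have sQ : Q^T = Q.
  by rewrite /Q linearD linearZ /= linearD /= !trmx_mul !trmxK [c2 *m c1^T + _]addrC.
exists (@bvec R n Q); split.
  by move=> x; rewrite /phi (@expand R n Q x sQ).
move=> S hS SSE gamma W hW x hx /=.
have n0 : (0 < n)%N by [].
have Su : S \in unitmx := posdef_unit hS.
set Si := invmx S.
have sS : S^T = S := hS.1.
have sSi : Si^T = Si by rewrite /Si trmx_inv sS.
have SiS : Si *m S = 1%:M := mulVmx Su.
have SSi : S *m Si = 1%:M := mulmxV Su.
set P := 2%:R *: Q - c3 *m c3^T.
have sP : P^T = P.
  by rewrite /P linearB linearZ /= sQ trmx_mul trmxK.
set M := Si *m P *m Si.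
have sM : M^T = M by rewrite /M !trmx_mul sSi sP mulmxA.
have key z : qf P z <= gamma * qf E z.
  have := lmax_bound sM n0 (S *m z).
  have -> : qf M (S *m z) = qf P z.
    rewrite /qf /M trmx_mul sS !mulmxA -(mulmxA z^T S Si) SSi mulmx1.
    by rewrite -(mulmxA _ Si S) SiS mulmx1.
  have -> : ((S *m z)^T *m (S *m z)) 0 0 = qf E z.
    by rewrite /qf -SSE trmx_mul sS !mulmxA.
  done.
pose sc (c z : 'cV[R]_n) := (c^T *m z) 0 0.
have qfQ : forall z, qf Q z = sc c1 z * sc c2 z + sc c3 z ^+ 2.
  move=> z; rewrite /Q qfD qfZ qfD !qf_outer /sc.
  by field.
have qfP : forall z, qf P z = 2 * (sc c1 z * sc c2 z) + sc c3 z ^+ 2.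
  move=> z; rewrite /P qfD qfN qfZ qfQ qf_outer /sc; ring.
have Eu : E \in unitmx by rewrite -SSE unitmx_mul Su.
have iE : invmx E = Si *m Si.
  have h : E *m (Si *m Si) = 1%:M.
    by rewrite -SSE mulmxA -(mulmxA S S Si) SSi mulmx1 SSi.
  by rewrite -[RHS](mulKmx Eu) h mulmx1.
have CSc (c : 'cV[R]_n) : sc c x ^+ 2 <= qf (invmx E) c * qf E x.
  have := CS (Si *m c) (S *m x).
  have -> : ((Si *m c)^T *m (S *m x)) 0 0 = sc c x.
    by rewrite /sc trmx_mul sSi !mulmxA -(mulmxA c^T Si S) SiS mulmx1.
  have -> : ((Si *m c)^T *m (Si *m c)) 0 0 = qf (invmx E) c.
    by rewrite /qf iE trmx_mul sSi !mulmxA.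
  have -> : ((S *m x)^T *m (S *m x)) 0 0 = qf E x.
    by rewrite /qf -SSE trmx_mul sS !mulmxA.
  done.
have Kge0 (c : 'cV[R]_n) : 0 <= qf (invmx E) c.
  have -> : qf (invmx E) c = ((Si *m c)^T *m (Si *m c)) 0 0.
    by rewrite /qf iE trmx_mul sSi !mulmxA.
  have := p_ge0 (Si *m c)^T; by rewrite /bl mulmx1 trmxK.
have Ex0 : 0 <= qf E x.
  have [->|x0] := eqVneq x 0; first by rewrite /qf mulmx0 mxE.
  exact: ltW (hE.2 x x0).
have g0 : 0 <= gamma.
  have := key c3; rewrite qfP.
  have -> : sc c1 c3 = 0 by rewrite /sc tr11 h31.
  rewrite mul0r mulr0 add0r.
  have d0 : 0 < sc c3 c3.
    have := p_ge0 c3^T; rewrite /bl mulmx1 trmxK -/(sc c3 c3) le_eqVlt.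
    case/orP => // /eqP h; exfalso.
    have : bl 1%:M c3^T c3^T = 0 by rewrite /bl mulmx1 trmxK.
    move=> /p_eq0 /eqP; rewrite trmx_eq0; apply/negP; exact: hc3.
  have e0 := hE.2 c3 hc3.
  move=> h; rewrite leNgt; apply/negP => gn.
  have : gamma * qf E c3 < 0 by rewrite pmulr_llt0.
  have : 0 < sc c3 c3 ^+ 2 by rewrite exprn_gt0.
  move=> a b; have := le_lt_trans h b; rewrite ltNge; move/negP; apply; exact: ltW.
rewrite qf_block qfN qf_outer -(@expand R n Q x sQ) qfQ qfZ qfD qfZ qf_outer.
have kx := key x; rewrite qfP in kx.
have ca := CSc c1; have cb := CSc c2.
have ka := Kge0 c1; have kb := Kge0 c2.
set a := sc c1 x in kx ca *; set b := sc c2 x in kx cb *; set v := sc c3 x in kx *.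
set K1 := qf (invmx E) c1 in ca ka *; set K2 := qf (invmx E) c2 in cb kb *.
set e := qf E x in hx kx ca cb Ex0 *.
have al : 0 <= alpha ^+ 2 - e by rewrite subr_ge0.
have f1 : 0 <= b ^+ 2 * (K1 * e - a ^+ 2) by rewrite mulr_ge0 ?sqr_ge0 ?subr_ge0.
have f2 : 0 <= b ^+ 2 * K1 * (alpha ^+ 2 - e) by apply: mulr_ge0 => //; apply: mulr_ge0 => //; exact: sqr_ge0.
have f3 : 0 <= a ^+ 2 * (K2 * e - b ^+ 2) by rewrite mulr_ge0 ?sqr_ge0 ?subr_ge0.
have f4 : 0 <= a ^+ 2 * K2 * (alpha ^+ 2 - e) by apply: mulr_ge0 => //; apply: mulr_ge0 => //; exact: sqr_ge0.
have f5 : 0 <= v ^+ 2 * (gamma * e - (2 * (a * b) + v ^+ 2)) by rewrite mulr_ge0 ?sqr_ge0 ?subr_ge0.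
have f6 : 0 <= v ^+ 2 * gamma * (alpha ^+ 2 - e) by apply: mulr_ge0 => //; apply: mulr_ge0 => //; exact: sqr_ge0.
have -> : (c3^T *m x) 0 0 = v by [].
case: hW => ->; rewrite qfZ qf_outer.
  have -> : (c2^T *m x) 0 0 = b by [].
  rewrite -/K1; nra.
have -> : (c1^T *m x) 0 0 = a by [].
rewrite -/K2; nra.
Qed.
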